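(* Let $G$ be a graph. Apply the following operations repeatedly until none is applicable: (1) if $v$ is a vertex of degree at most $2$ and $e$ an edge incident to $v$, contract $v$ along $e$; (2) if $v$ is an isolated vertex, delete $v$. The resulting graph is the (canonical) minor-3-core of $G$.
   Context: Graphs are simple and undirected. Contracting a vertex $u$ along an edge $\{u,v\}$ (i.e. to $v$) produces the graph with vertex set $V\setminus\{u\}$ and edge set consisting of all edges not incident to $u$ together with all edges $\{u',v\}$ with $u'\neq v$ and $\{u',u\}\in E$. A minor of $G$ is a graph obtained from $G$ by vertex contractions and subgraph operations; its vertices are (non-contracted) vertices of $G$. A minor-3-core of $G$ is a minor $H$ of $G$ with minimum degree at least $3$ such that no minor of $G$ with minimum degree at least $3$ has more edges than $H$. A vertex $v$ of a minor-3-core $C$ has the disjoint-paths property if, for its neighbours $u_1,\dots,u_{\Delta_C(v)}$ in $C$, there are paths in $G$ from $v$ to the $u_i$ pairwise sharing only $v$; the canonical minor-3-core is the minor-3-core in which every vertex has this property (it exists and is unique, and every minor-3-core is isomorphic to it). *)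

(* Defs.v *)
From mathcomp Require Import all_boot.
Set Implicit Arguments. Unset Strict Implicit. Unset Printing Implicit Defensive.

Section Graphs.
Variable T : finType.

Definition graph := ({set T} * {set {set T}})%type.
Definition verts (G : graph) : {set T} := G.1.
Definition edges (G : graph) : {set {set T}} := G.2.

Definition wf_graph (G : graph) : Prop :=
  forall e, e \in edges G -> exists x y, [/\ x != y, x \in verts G, y \in verts G & e = [set x; y]].

Definition adj (G : graph) (x y : T) : bool := [set x; y] \in edges G.

Definition deg (G : graph) (v : T) : nat := #|[set e in edges G | v \in e]|.

Definition contract (G : graph) (u v : T) : graph :=
  (verts G :\ u,
   [set e in edges G | u \notin e]
     :|: [set [set u'; v] | u' in [set u' | (u' != v) && ([set u'; u] \in edges G)]]).

Definition del_vertex (G : graph) (v : T) : graph :=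
  (verts G :\ v, [set e in edges G | v \notin e]).

Definition del_edge (G : graph) (e : {set T}) : graph :=
  (verts G, edges G :\ e).

Inductive minor_step (G : graph) : graph -> Prop :=
  | ms_contract u v : [set u; v] \in edges G -> minor_step G (contract G u v)
  | ms_del_vertex v : v \in verts G -> minor_step G (del_vertex G v)
  | ms_del_edge e : e \in edges G -> minor_step G (del_edge G e).

Inductive rtc (R : graph -> graph -> Prop) (G : graph) : graph -> Prop :=
  | rtc_refl : rtc R G G
  | rtc_step H K : rtc R G H -> R H K -> rtc R G K.

Definition is_minor (G H : graph) : Prop := rtc minor_step G H.

Definition mindeg_ge3 (H : graph) : Prop := forall v, v \in verts H -> 3 <= deg H v.

Definition minor3core (G H : graph) : Prop :=
  [/\ is_minor G H, mindeg_ge3 H &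
      forall H', is_minor G H' -> mindeg_ge3 H' -> #|edges H'| <= #|edges H| ].

Definition gpath (G : graph) (v u : T) (p : seq T) : Prop :=
  [/\ v \in verts G, all (fun x => x \in verts G) p, path (adj G) v p & last v p = u].

Definition disjoint_paths_prop (G C : graph) (v : T) : Prop :=
  exists P : T -> seq T,
    (forall u, adj C v u -> gpath G v u (P u)) /\
    (forall u u', adj C v u -> adj C v u' -> u != u' ->
       [set x in v :: P u] :&: [set x in v :: P u'] = [set v]).

Definition canonical_minor3core (G C : graph) : Prop :=
  minor3core G C /\ forall v, v \in verts C -> disjoint_paths_prop G C v.

Inductive red_step (G : graph) : graph -> Prop :=
  | rs_contract v w : v \in verts G -> deg G v <= 2 -> [set v; w] \in edges G ->
      red_step G (contract G v w)
  | rs_isolated v : v \in verts G -> deg G v = 0 -> red_step G (del_vertex G v).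

End Graphs.

(* Main.v *)
Require Import Defs.
From mathcomp Require Import all_boot.
Set Implicit Arguments. Unset Strict Implicit. Unset Printing Implicit Defensive.

Section Basics.
Variable T : finType.
Implicit Types (G H K : graph T) (a b c d u v w x y z : T).

Lemma set2C a b : [set a; b] = [set b; a].
Proof. by apply/setP => x; rewrite !inE orbC. Qed.

Lemma adjC G a b : adj G a b = adj G b a.
Proof. by rewrite /adj set2C. Qed.

Lemma set2_eq a b c d : [set a; b] = [set c; d] ->
  (a = c /\ b = d) \/ (a = d /\ b = c).
Proof.
move=> E.
have ha : a \in [set c; d] by rewrite -E !inE eqxx.
have hb : b \in [set c; d] by rewrite -E !inE eqxx orbT.
have hc : c \in [set a; b] by rewrite E !inE eqxx.
have hd : d \in [set a; b] by rewrite E !inE eqxx orbT.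
move: ha hb hc hd; rewrite !inE.
case/orP=> /eqP ha hb hc hd.
  subst a; case/orP: hd => /eqP hd; last by left.
  subst d; case/orP: hb => /eqP hb; by left.
subst a; case/orP: hc => /eqP hc; last by right.
subst c; case/orP: hb => /eqP hb; by right.
Qed.

Lemma wf_adj G a b : wf_graph G -> adj G a b ->
  [/\ a != b, a \in verts G & b \in verts G].
Proof.
move=> wf /wf [x [y [xy xV yV E]]].
have := set2_eq E; case=> [[-> ->]|[-> ->]]; split=> //; by rewrite eq_sym.
Qed.

Lemma wf_edge G e : wf_graph G -> e \in edges G -> exists a b, e = [set a; b] /\ adj G a b.
Proof.
move=> wf eE; have [x [y [_ _ _ E]]] := wf _ eE.
by exists x, y; split=> //; rewrite /adj -E.
Qed.

Lemma adj_deg G v w : adj G v w -> 0 < deg G v.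
Proof.
move=> h; rewrite /deg card_gt0; apply/set0Pn; exists [set v; w].
by rewrite inE; apply/andP; split=> //; rewrite !inE eqxx.
Qed.

Lemma set2_neq v p q : v != q -> p != q -> [set v; p] != [set v; q].
Proof.
move=> vq pq; apply/eqP => /set2_eq [[_ /eqP]|[/eqP]]; first by rewrite (negbTE pq).
by rewrite (negbTE vq).
Qed.

Lemma deg_nbr2 G v w u a : wf_graph G -> deg G v <= 2 -> adj G v w -> adj G v u ->
  u != w -> adj G v a -> a = w \/ a = u.
Proof.
move=> wf dv hw hu uw ha.
case: (eqVneq a w) => [->|aw]; first by left.
case: (eqVneq a u) => [->|au]; first by right.
exfalso.
have [vw _ _] := wf_adj wf hw.
have [vu _ _] := wf_adj wf hu.
have [va _ _] := wf_adj wf ha.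
have sub : [set v; w] |: ([set v; u] |: [set [set v; a]]) \subset [set e in edges G | v \in e].
  apply/subsetP=> e; rewrite !inE => /orP[|/orP[]] /eqP ->; rewrite !inE eqxx andbT //.
have := subset_leq_card sub; rewrite -/(deg G v).
have n1' : [set v; w] != [set v; u] by apply: set2_neq => //; rewrite eq_sym.
have n2 : [set v; w] != [set v; a] by apply: set2_neq => //; rewrite eq_sym.
have n3 : [set v; u] != [set v; a] by apply: set2_neq => //; rewrite eq_sym.
rewrite cardsU1 cardsU1 cards1 !inE (negbTE n1') (negbTE n2) (negbTE n3) /=.
by move=> h; move: (leq_trans h dv).
Qed.

Lemma adj_contract_old G u v a b : adj G a b -> a != u -> b != u ->
  adj (contract G u v) a b.
Proof.
rewrite /adj /contract /edges /= => h au bu; rewrite !inE.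
by apply/orP; left; rewrite h /= ?inE negb_or ![u == _]eq_sym au bu.
Qed.

Lemma adj_contract_new G u v a : adj G a u -> a != v ->
  adj (contract G u v) a v.
Proof.
rewrite /adj /contract /edges /= => h av; rewrite !inE.
by apply/orP; right; apply/imsetP; exists a => //; rewrite inE av.
Qed.

Lemma adj_contract_inv G u v a b : adj (contract G u v) a b ->
  (adj G a b /\ a != u /\ b != u) \/
  ((b = v /\ adj G a u /\ a != v) \/ (a = v /\ adj G b u /\ b != v)).
Proof.
rewrite /adj /contract /edges /= !inE => /orP[/andP[h]|].
  by rewrite negb_or ![u == _]eq_sym => /andP[au bu]; left.
case/imsetP=> u'; rewrite inE => /andP[u'v h] /set2_eq [[-> ->]|[-> ->]]; right.
  by left.
by right.
Qed.

Lemma wf_contract G u v : wf_graph G -> adj G u v -> wf_graph (contract G u v).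
Proof.
move=> wf huv e; rewrite /contract /edges /= !inE => /orP[/andP[eE ue]|/imsetP[u' Hu' ->]].
  have [x [y [xy xV yV E]]] := wf _ eE.
  exists x, y; split=> //; rewrite !inE ?xV ?yV andbT; apply/eqP=> ux;
    by move: ue; rewrite E !inE ux eqxx ?orbT.
move: Hu'; rewrite inE => /andP[u'v h].
have [u'u u'V _] := wf_adj wf h.
have [uv _ vV] := wf_adj wf huv.
by exists u', v; split=> //; rewrite !inE ?u'V ?vV andbT // eq_sym.
Qed.

Lemma wf_del_vertex G v : wf_graph G -> wf_graph (del_vertex G v).
Proof.
move=> wf e; rewrite /del_vertex /edges /= !inE => /andP[eE ve].
have [x [y [xy xV yV E]]] := wf _ eE.
exists x, y; split=> //; rewrite !inE ?xV ?yV andbT; apply/eqP=> ux;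
  by move: ve; rewrite E !inE ux eqxx ?orbT.
Qed.

Lemma wf_del_edge G e : wf_graph G -> wf_graph (del_edge G e).
Proof.
move=> wf f; rewrite /del_edge /edges /= !inE => /andP[_ fE]; exact: wf.
Qed.

Lemma wf_minor_step G K : wf_graph G -> minor_step G K -> wf_graph K.
Proof.
move=> wf [u v h|v _|e _]; [exact: wf_contract|exact: wf_del_vertex|exact: wf_del_edge].
Qed.

Lemma wf_red_step G K : wf_graph G -> red_step G K -> wf_graph K.
Proof.
move=> wf [v w _ _ h|v _ _]; [exact: wf_contract|exact: wf_del_vertex].
Qed.

Lemma red_minor G K : red_step G K -> minor_step G K.
Proof. by case=> [v w _ _ h|v vV _]; constructor. Qed.

Lemma rtc_wf (R : graph T -> graph T -> Prop) G K :
  (forall A B, wf_graph A -> R A B -> wf_graph B) -> wf_graph G -> rtc R G K -> wf_graph K.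
Proof. by move=> hR wf; elim=> // A B _ IH /(hR _ _ IH). Qed.

Lemma rtc_trans (R : graph T -> graph T -> Prop) A B C : rtc R A B -> rtc R B C -> rtc R A C.
Proof. by move=> hAB; elim=> // X Y _ IH hXY; exact: rtc_step IH hXY. Qed.

Lemma rtc_first (R : graph T -> graph T -> Prop) A B C : R A B -> rtc R B C -> rtc R A C.
Proof. by move=> h; apply: rtc_trans; apply: rtc_step (rtc_refl _ _) h. Qed.

Lemma rtc_sub (R R' : graph T -> graph T -> Prop) A B :
  (forall X Y, R X Y -> R' X Y) -> rtc R A B -> rtc R' A B.
Proof. by move=> h; elim=> [|X Y _ IH /h]; [exact: rtc_refl|exact: rtc_step]. Qed.

Lemma card_contract G u v : #|edges (contract G u v)| <= #|edges G|.
Proof.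
rewrite /contract /edges /=.
set A := [set e in G.2 | u \notin e].
set S := [set u' | (u' != v) && ([set u'; u] \in G.2)].
apply: (leq_trans (leq_card_setU _ _)).
apply: (leq_trans (leq_add (leqnn _) (leq_imset_card _ _))).
have -> : #|S| = #|[set [set u'; u] | u' in S]|.
  by rewrite card_imset // => p q /set2_eq [[]|[-> ->]].
have sub : [set [set u'; u] | u' in S] \subset [set e in G.2 | u \in e].
  by apply/subsetP=> e /imsetP[u']; rewrite !inE => /andP[_ h] ->; rewrite h !inE eqxx orbT.
apply: (leq_trans (leq_add (leqnn _) (subset_leq_card sub))).
have -> : A = G.2 :\: [set e : {set T} | u \in e] by apply/setP=> e; rewrite !inE andbC.
have -> : [set e in G.2 | u \in e] = G.2 :&: [set e : {set T} | u \in e].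
  by apply/setP=> e; rewrite !inE andbC.
by rewrite addnC cardsID.
Qed.

Lemma card_minor_step G K : minor_step G K -> #|edges K| <= #|edges G|.
Proof.
case=> [u v _|v _|e _]; first exact: card_contract.
  by apply: subset_leq_card; apply/subsetP=> e; rewrite /del_vertex /edges /= inE => /andP[].
by apply: subset_leq_card; apply/subsetP=> f; rewrite /del_edge /edges /= inE => /andP[].
Qed.

Lemma card_minor G K : is_minor G K -> #|edges K| <= #|edges G|.
Proof. by elim=> // A B _ IH /card_minor_step h; exact: leq_trans h IH. Qed.


Definition brel G (r : T -> option T) x : rel T :=
  fun a b => [&& adj G a b, r a == Some x & r b == Some x].

Record model G K (r : T -> option T) : Prop := Model {
  m_wf : wf_graph K;
  m_lab : forall x, x \in verts K -> r x = Some x;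
  m_rngK : forall y x, r y = Some x -> x \in verts K;
  m_rngG : forall y x, r y = Some x -> y \in verts G;
  m_con : forall y x, r y = Some x -> connect (brel G r x) y x;
  m_edge : forall a b, adj K a b -> exists c d, [/\ r c = Some a, r d = Some b & adj G c d] }.

Lemma brel_sym G r x : symmetric (brel G r x).
Proof. by move=> a b; rewrite /brel adjC; case: (adj G b a); rewrite /= 1?andbC. Qed.

Lemma con_sym G r x a b : connect (brel G r x) a b = connect (brel G r x) b a.
Proof. exact: (sym_connect_sym (@brel_sym G r x)). Qed.

Lemma connect_map (e e' : rel T) (f : T -> T) :
  (forall a b, e a b -> connect e' (f a) (f b)) ->
  forall a b, connect e a b -> connect e' (f a) (f b).
Proof.
move=> H a b /connectP [p pth ->]; elim: p a pth => [|c p IH] a /=.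
  by move=> _; exact: connect0.
by case/andP=> eac pth; exact: connect_trans (H _ _ eac) (IH _ pth).
Qed.

Lemma first_step (e : rel T) a b : connect e a b -> a != b -> exists c, e a c.
Proof.
case/connectP=> [[|c p]] /=; first by move=> _ ->; rewrite eqxx.
by case/andP=> h _ _ _; exists c.
Qed.

Lemma brel_inv G r x a b : brel G r x a b -> [/\ adj G a b, r a = Some x & r b = Some x].
Proof. by case/and3P=> h /eqP -> /eqP ->. Qed.

Lemma model_lab_ne G K r y x : model G K r -> r y = Some x -> y != x -> y \notin verts K.
Proof.
move=> M ry yx; apply/negP=> /(m_lab M); rewrite ry => -[yx']; by rewrite yx' eqxx in yx.
Qed.

Lemma model_refl G : wf_graph G -> model G G (fun y => if y \in verts G then Some y else None).
Proof.
move=> wf; split=> //.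
- by move=> x ->.
- by move=> y x; case: ifP=> // yV [<-].
- by move=> y x; case: ifP=> // yV [<-].
- by move=> y x; case: ifP=> // yV [<-]; exact: connect0.
- move=> a b h; exists a, b; have [_ aV bV] := wf_adj wf h; by rewrite aV bV.
Qed.

Lemma model_sub G G' K r : model G K r ->
  (forall a b, adj G a b -> r a != None -> r b != None -> adj G' a b) ->
  (forall y, r y != None -> y \in verts G') -> model G' K r.
Proof.
move=> M hE hV; split; try exact: (m_wf M); try exact: (m_lab M); try exact: (m_rngK M).
- by move=> y x ry; apply: hV; rewrite ry.
- move=> y x /(m_con M); apply: connect_sub => a b /brel_inv [h ra rb].
  by apply: connect1; rewrite /brel ra rb !eqxx hE ?ra ?rb.
- move=> a b /(m_edge M) [c [d [rc rd h]]]; exists c, d; split=> //.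
  by apply: hE; rewrite ?rc ?rd.
Qed.

Lemma model_step G K K' r : model G K r -> minor_step K K' -> exists r', model G K' r'.
Proof.
move=> M; have wfK := m_wf M; case.
-
  move=> u v huv; have {}huv : adj K u v by [].
  have [uv uK vK] := wf_adj wfK huv.
  pose s x := if x == u then v else x.
  pose r' y := if r y == Some u then Some v else r y.
  have hr : forall y x, r y = Some x -> r' y = Some (s x).
    by move=> y x ry; rewrite /r' /s ry (inj_eq (@Some_inj _)); case: eqP.
  have hr2 : forall y x, r' y = Some x ->
      (r y = Some u /\ x = v) \/ (r y = Some x /\ x != u).
    move=> y x; rewrite /r'; case: eqP => [ru [<-]|ru rx]; first by left.
    by right; split=> //; apply/eqP=> xu; apply: ru; rewrite rx xu.
  have sub : forall x, subrel (brel G r x) (connect (brel G r' (s x))).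
    move=> x a b /brel_inv [h ra rb]; apply: connect1.
    by rewrite /brel h (hr _ _ ra) (hr _ _ rb) eqxx.
  have su : s u = v by rewrite /s eqxx.
  have sv : s v = v by rewrite /s eq_sym (negbTE uv).
  exists r'; split.
  + exact: wf_contract.
  + move=> x; rewrite /contract /verts /= !inE => /andP[xu xK].
    by rewrite (hr _ _ (m_lab M xK)) /s (negbTE xu).
  + move=> y x /hr2 [[_ ->]|[ry xu]]; rewrite /contract /verts /= !inE.
      by rewrite eq_sym uv.
    by rewrite xu (m_rngK M ry).
  + by move=> y x /hr2 [[ry _]|[ry _]]; exact: (m_rngG M ry).
  + move=> y x /hr2 [[ry ->]|[ry xu]].
    * have [c [d [rc rd hcd]]] := m_edge M huv.
      have c1 := connect_sub (sub u) (m_con M ry); rewrite su in c1.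
      have c2 := connect_sub (sub u) (m_con M rc); rewrite su con_sym in c2.
      have c3 := connect_sub (sub v) (m_con M rd); rewrite sv in c3.
      apply: connect_trans c1 (connect_trans c2 (connect_trans _ c3)).
      by apply: connect1; rewrite /brel hcd (hr _ _ rc) (hr _ _ rd) su sv eqxx.
    * have := connect_sub (sub x) (m_con M ry); by rewrite /s (negbTE xu).
  + move=> a b /adj_contract_inv [[h [au bu]]|[[-> [h av]]|[-> [h bv]]]].
    * have [c [d [rc rd hcd]]] := m_edge M h; exists c, d.
      by rewrite (hr _ _ rc) (hr _ _ rd) /s (negbTE au) (negbTE bu).
    * have [c [d [rc rd hcd]]] := m_edge M h; exists c, d.
      have [au _ _] := wf_adj wfK h; by rewrite (hr _ _ rc) (hr _ _ rd) su /s (negbTE au).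
    * have [c [d [rc rd hcd]]] := m_edge M h; exists d, c.
      have [bu _ _] := wf_adj wfK h; by rewrite adjC (hr _ _ rc) (hr _ _ rd) su /s (negbTE bu).
-
  move=> v vK.
  pose r' y := if r y == Some v then None else r y.
  have hr2 : forall y x, r' y = Some x -> r y = Some x /\ x != v.
    move=> y x; rewrite /r'; case: eqP => // ru rx; split=> //.
    by apply/eqP=> xv; apply: ru; rewrite rx xv.
  have hr : forall y x, r y = Some x -> x != v -> r' y = Some x.
    by move=> y x ry xv; rewrite /r' ry (inj_eq (@Some_inj _)) (negbTE xv).
  exists r'; split.
  + exact: wf_del_vertex.
  + move=> x; rewrite /del_vertex /verts /= !inE => /andP[xv xK].
    exact: hr (m_lab M xK) xv.
  + move=> y x /hr2 [ry xv]; by rewrite /del_vertex /verts /= !inE xv (m_rngK M ry).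
  + by move=> y x /hr2 [ry _]; exact: (m_rngG M ry).
  + move=> y x /hr2 [ry xv]; have := m_con M ry; apply: connect_sub => a b /brel_inv [h ra rb].
    by apply: connect1; rewrite /brel h (hr _ _ ra xv) (hr _ _ rb xv) eqxx.
  + move=> a b; rewrite /adj /del_vertex /edges /= inE => /andP[h].
    rewrite !inE negb_or ![v == _]eq_sym => /andP[av bv].
    have [c [d [rc rd hcd]]] := m_edge M h; exists c, d.
    by rewrite (hr _ _ rc av) (hr _ _ rd bv).
-
  move=> e eK; exists r; split.
  + exact: wf_del_edge.
  + exact: (m_lab M).
  + exact: (m_rngK M).
  + exact: (m_rngG M).
  + exact: (m_con M).
  + move=> a b; rewrite /adj /del_edge /edges /= inE => /andP[_ h]; exact: (m_edge M h).
Qed.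

Lemma minor_model G K : wf_graph G -> is_minor G K -> exists r, model G K r.
Proof.
move=> wf; elim=> [|A B _ [r M] st]; first by eexists; exact: model_refl.
exact: model_step M st.
Qed.

Lemma model_contract_same G K r y z x : wf_graph G -> model G K r ->
  r y = Some x -> y != x -> adj G y z -> r z = Some x ->
  model (contract G y z) K (fun c => if c == y then None else r c).
Proof.
move=> wf M ry yx hyz rz.
have [yz yV zV] := wf_adj wf hyz.
pose r' c := if c == y then None else r c.
pose f c := if c == y then z else c.
have yK := model_lab_ne M ry yx.
have hr : forall c x0, r c = Some x0 -> r' (f c) = Some x0.
  move=> c x0 rc; rewrite /r' /f; case: (eqVneq c y) => [cy|cy].
    by rewrite eq_sym (negbTE yz) rz -ry -cy rc.
  by rewrite (negbTE cy).
have hr2 : forall c x0, r' c = Some x0 -> r c = Some x0 /\ c != y.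
  by move=> c x0; rewrite /r'; case: eqP.
have fadj : forall c d, adj G c d -> f c != f d -> adj (contract G y z) (f c) (f d).
  move=> c d h; rewrite /f; case: (eqVneq c y) => [cy|cy].
    subst c; have [yd _ _] := wf_adj wf h.
    have dy : d != y by rewrite eq_sym.
    rewrite (negbTE dy) => zd.
    by rewrite adjC; apply: adj_contract_new; rewrite 1?adjC // eq_sym.
  case: (eqVneq d y) => [dy|dy] cz.
    by subst d; apply: adj_contract_new.
  exact: adj_contract_old.
have fK : forall c, c \in verts K -> f c = c.
  move=> c cK; rewrite /f; case: (eqVneq c y) => [cy|//].
  by rewrite -cy cK in yK.
split.
- exact: (m_wf M).
- move=> x0 x0K; have := hr _ _ (m_lab M x0K); by rewrite fK.
- by move=> c x0 /hr2 [rc _]; exact: (m_rngK M rc).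
- move=> c x0 /hr2 [rc cy]; rewrite /contract /verts /= !inE cy; exact: (m_rngG M rc).
- move=> c x0 /hr2 [rc cy].
  have hc : connect (brel (contract G y z) r' x0) (f c) (f x0).
    apply: (connect_map _ (m_con M rc)) => a b /brel_inv [h ra rb].
    case: (eqVneq (f a) (f b)) => [->|ne]; first exact: connect0.
    by apply: connect1; rewrite /brel (hr _ _ ra) (hr _ _ rb) eqxx fadj.
  by move: hc; rewrite (fK x0 (m_rngK M rc)) /f (negbTE cy).
- move=> a b hab; have [ab _ _] := wf_adj (m_wf M) hab.
  have [c [d [rc rd h]]] := m_edge M hab; exists (f c), (f d); split.
  + exact: hr rc.
  + exact: hr rd.
  + apply: fadj => //; apply/eqP=> e.
    have := hr _ _ rc; rewrite e (hr _ _ rd) => -[ba].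
    by rewrite ba eqxx in ab.
Qed.

Definition msr G := #|verts G| + #|edges G|.

Lemma model_reduce G K r : wf_graph G -> model G K r ->
  K = G \/ exists G' r', [/\ minor_step G G', model G' K r' & msr G' < msr G].
Proof.
move=> wf M.
have ltV : forall y, y \in verts G -> #|verts G :\ y| < #|verts G|.
  by move=> y yV; rewrite (cardsD1 y (verts G)) yV.
case: (pickP (fun y => (y \in verts G) && (r y == None))) => [y /andP[yV /eqP ry]|hA].
  right; exists (del_vertex G y), r; split.
  - exact: ms_del_vertex.
  - apply: (model_sub M).
      move=> a b h ra rb; rewrite /adj /del_vertex /edges /= !inE; apply/andP; split=> //.
      by rewrite negb_or; apply/andP; split; apply/eqP=> e; [move: ra|move: rb]; rewrite -e ry.
    move=> c; case e: (r c) => [x0|] // _; have cV := m_rngG M e.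
    rewrite /del_vertex /verts /= !inE cV andbT; apply/eqP => cy; by rewrite cy ry in e.
  - rewrite /msr -addSn; apply: leq_add (ltV y yV) _.
    by apply: subset_leq_card; apply/subsetP=> e; rewrite /del_vertex /edges /= inE; case/andP.
have hA' : forall y, y \in verts G -> r y != None.
  by move=> y yV; have := hA y; rewrite /= yV /=; move/negbT.
case: (pickP (fun y => (r y != None) && (r y != Some y))) => [y /andP[ryN ryy]|hB].
  case ryx: (r y) ryN ryy => [x|] // _ yx.
  have yx' : y != x by apply: contraNneq yx => ->.
  have [z /brel_inv [hyz _ rz]] := first_step (m_con M ryx) yx'.
  right; exists (contract G y z), (fun c => if c == y then None else r c); split.
  - exact: ms_contract.
  - exact: model_contract_same ryx yx' hyz rz.
  - rewrite /msr -addSn; apply: leq_add; last exact: card_contract.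
    exact: (ltV _ (m_rngG M ryx)).
have rV : forall y, y \in verts G -> r y = Some y.
  move=> y yV; have := hB y; have := hA' y yV; rewrite /=.
  by case: (r y) => [x|] //= _ /negbFE /eqP.
have VK : verts K = verts G.
  apply/setP=> y; apply/idP/idP => [/(m_lab M) ry|yV]; first exact: (m_rngG M ry).
  exact: (m_rngK M (rV y yV)).
have EK : edges K \subset edges G.
  apply/subsetP=> e eK; have [a [b [-> hab]]] := wf_edge (m_wf M) eK.
  have [c [d [rc rd h]]] := m_edge M hab.
  have := rV c (m_rngG M rc); rewrite rc => -[->].
  by have := rV d (m_rngG M rd); rewrite rd => -[->].
case: (pickP (fun e => (e \in edges G) && (e \notin edges K))) => [e /andP[eG eK]|hC].
  right; exists (del_edge G e), r; split.
  - exact: ms_del_edge.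
  - split; try exact: (m_wf M); try exact: (m_lab M); try exact: (m_rngK M).
    + exact: (m_rngG M).
    + move=> y x ry; have := rV y (m_rngG M ry); rewrite ry => -[->]; exact: connect0.
    + move=> a b hab; have [c [d [rc rd h]]] := m_edge M hab.
      have := rV c (m_rngG M rc); rewrite rc => -[ca].
      have := rV d (m_rngG M rd); rewrite rd => -[db]; subst a b.
      exists c, d; split=> //; rewrite /adj /del_edge /edges /= !inE; apply/andP; split.
        by apply: contraNneq eK => <-.
      exact: h.
  - rewrite /msr /del_edge /verts /edges /= ltn_add2l (cardsD1 e (edges G)) eG.
    by [].
left; have EE : edges K = edges G.
  apply/eqP; rewrite eqEsubset EK /=; apply/subsetP=> e eG.
  by have := hC e; rewrite /= eG /=; move/negbFE.
rewrite [LHS]surjective_pairing [RHS]surjective_pairing; congr pair; [exact: VK|exact: EE].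
Qed.

Lemma model_minor_n n G K r : msr G <= n -> wf_graph G -> model G K r -> is_minor G K.
Proof.
elim: n G r => [|n IH] G r hn wf M.
  case: (model_reduce wf M) => [->|[G' [r' [st M' lt]]]]; first exact: rtc_refl.
  by move: (leq_trans lt hn).
case: (model_reduce wf M) => [->|[G' [r' [st M' lt]]]]; first exact: rtc_refl.
have wf' := wf_minor_step wf st.
apply: rtc_first st _; apply: IH M' => //.
by rewrite -ltnS; apply: leq_trans lt hn.
Qed.

Lemma model_minor G K r : wf_graph G -> model G K r -> is_minor G K.
Proof. exact: model_minor_n (leqnn _). Qed.

Definition sw a b x : T := if x == a then b else if x == b then a else x.

Lemma swK a b : involutive (sw a b).
Proof.
move=> x; rewrite /sw; case: (eqVneq x a) => [->|xa].
  rewrite eqxx; case: (eqVneq b a) => [->|ba] //; by rewrite eqxx.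
case: (eqVneq x b) => [->|xb]; first by rewrite eqxx.
by rewrite (negbTE xa) (negbTE xb).
Qed.

Lemma sw_inj a b : injective (sw a b).
Proof. exact: inv_inj (swK a b). Qed.

Lemma sw_a a b : sw a b a = b. Proof. by rewrite /sw eqxx. Qed.
Lemma sw_b a b : sw a b b = a.
Proof. by rewrite /sw eqxx; case: eqP. Qed.
Lemma sw_o a b x : x != a -> x != b -> sw a b x = x.
Proof. by move=> xa xb; rewrite /sw (negbTE xa) (negbTE xb). Qed.

Definition ren (s : T -> T) K : graph T := (s @: verts K, [set s @: (e : {set T}) | e in edges K]).
Arguments ren : clear implicits.

Lemma imset2 (s : T -> T) a b : s @: [set a; b] = [set s a; s b].
Proof. by rewrite imsetU1 imset_set1. Qed.

Lemma ren_card s K : injective s -> #|edges (ren s K)| = #|edges K|.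
Proof. by move=> inj; rewrite /ren /edges /= card_imset //; exact: imset_inj. Qed.

Lemma ren_deg s K x : injective s -> deg (ren s K) (s x) = deg K x.
Proof.
move=> inj; rewrite /deg /ren /edges /=.
have -> : [set e : {set T} in [set s @: (e : {set T}) | e in K.2] | s x \in e] = [set s @: (e : {set T}) | e in [set e : {set T} in K.2 | x \in e]].
  apply/setP=> e'; rewrite inE; apply/andP/imsetP.
    case=> /imsetP[e eE ->]; rewrite (mem_imset _ _ inj) => xe.
    by exists e => //; rewrite inE eE.
  case=> e; rewrite inE => /andP[eE xe] ->; split; first by apply/imsetP; exists e.
  by rewrite (mem_imset _ _ inj).
by rewrite card_imset //; exact: imset_inj.
Qed.

Lemma ren_mindeg s K : injective s -> mindeg_ge3 K -> mindeg_ge3 (ren s K).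
Proof.
move=> inj md v' /imsetP[v vK ->]; rewrite ren_deg //; exact: md.
Qed.

Lemma model_ren G K r x t : model G K r -> x \in verts K -> r t = Some x -> t != x ->
  model G (ren (sw x t) K) (fun y => omap (sw x t) (r y)).
Proof.
move=> M xK rt tx; set s := sw x t.
have inj : injective s := @sw_inj x t.
have tK := model_lab_ne M rt tx.
have sz : forall z, z \in verts K -> z != x -> s z = z.
  move=> z zK zx; apply: sw_o => //; apply: contraNneq tK => <-; exact: zK.
have hr2 : forall y x0, omap s (r y) = Some x0 -> exists z, r y = Some z /\ x0 = s z.
  by move=> y x0; case: (r y) => //= z [<-]; exists z.
have breq : forall z, brel G (fun y => omap s (r y)) (s z) =2 brel G r z.
  move=> z a b; rewrite /brel; congr andb; congr andb;
    by case: (r _) => //= c; rewrite !(inj_eq (@Some_inj _)) (inj_eq inj).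
split.
- move=> e' /imsetP[e eK ->].
  have [a [b [-> hab]]] := wf_edge (m_wf M) eK.
  have [ab aK bK] := wf_adj (m_wf M) hab.
  exists (s a), (s b); split; [by rewrite (inj_eq inj)|exact: imset_f|exact: imset_f|exact: imset2].
- move=> x' /imsetP[z zK ->].
  case: (eqVneq z x) => [->|zx]; first by rewrite /s sw_a rt /= sw_a.
  by rewrite (sz z zK zx) (m_lab M zK) /= (sz z zK zx).
- move=> y x' /hr2 [z [ry ->]]; apply/imsetP; exists z => //; exact: (m_rngK M ry).
- by move=> y x' /hr2 [z [ry _]]; exact: (m_rngG M ry).
- move=> y x' /hr2 [z [ry ->]]; rewrite (eq_connect (breq z)).
  apply: connect_trans (m_con M ry) _.
  case: (eqVneq z x) => [->|zx]; first by rewrite /s sw_a con_sym; exact: (m_con M rt).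
  rewrite (sz z (m_rngK M ry) zx); exact: connect0.
- move=> a' b'; rewrite /adj /ren /edges /= => /imsetP[e eK].
  have [a [b [-> hab]]] := wf_edge (m_wf M) eK.
  have [c [d [rc rd h]]] := m_edge M hab.
  rewrite imset2 => /set2_eq [[-> ->]|[-> ->]].
    by exists c, d; rewrite rc rd.
  by exists d, c; rewrite rc rd set2C.
Qed.

Lemma label_ext G K r v : wf_graph G -> model G K r -> mindeg_ge3 K -> v \in verts K ->
  deg G v <= 2 -> exists t, r t = Some v /\ t != v.
Proof.
move=> wf M md vK dv.
case: (pickP (fun t => (r t == Some v) && (t != v))) => [t /andP[/eqP rt tv]|hN].
  by exists t.
exfalso.
have hN' : forall t, r t = Some v -> t = v.
  by move=> t rt; have := hN t; rewrite /= rt eqxx /=; move/negbFE/eqP.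
have rv := m_lab M vK.
pose psi (e : {set T}) := (fun y => odflt v (r y)) @: e.
have key : forall b, adj K v b -> [set v; b] \in psi @: [set e in edges G | v \in e].
  move=> b hb; have [c [d [rc rd h]]] := m_edge M hb.
  have cv := hN' _ rc; subst c.
  apply/imsetP; exists [set v; d]; first by rewrite inE; apply/andP; split; [exact: h|rewrite !inE eqxx].
  by rewrite /psi imset2 rv rd.
have sub : [set e in edges K | v \in e] \subset psi @: [set e in edges G | v \in e].
  apply/subsetP=> e; rewrite inE => /andP[eK ve].
  have [a [b [E hab]]] := wf_edge (m_wf M) eK; subst e.
  move: ve; rewrite !inE => /orP[]/eqP ?; subst.
    exact: key.
  by rewrite set2C; apply: key; rewrite adjC.
have := leq_trans (subset_leq_card sub) (leq_imset_card _ _).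
rewrite -/(deg K v) -/(deg G v) => h.
by have := leq_trans (md v vK) (leq_trans h dv).
Qed.

(* v in branch set of x, w in branch set of x' <> x *)
Lemma model_contract_other G K r v w u x x' : wf_graph G -> model G K r ->
  deg G v <= 2 -> adj G v w -> adj G v u -> u != w ->
  r v = Some x -> v != x -> r u = Some x -> r w = Some x' -> x' != x ->
  model (contract G v w) K (fun c => if c == v then None else r c).
Proof.
move=> wf M dv hw hu uw rv vx ru rw x'x.
have nb := deg_nbr2 wf dv hw hu uw.
have [vw _ wV] := wf_adj wf hw.
have [vu _ uV] := wf_adj wf hu.
have vK := model_lab_ne M rv vx.
pose r' c := if c == v then None else r c.
pose f c := if c == v then u else c.
have hr2 : forall c x0, r' c = Some x0 -> r c = Some x0 /\ c != v.
  by move=> c x0; rewrite /r'; case: eqP.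
have hr : forall c x0, r c = Some x0 -> c != v -> r' c = Some x0.
  by move=> c x0 rc cv; rewrite /r' (negbTE cv).
have Kv : forall z, z \in verts K -> z != v.
  by move=> z zK; apply: contraNneq vK => <-.
have uv : u != v by rewrite eq_sym.
have wv : w != v by rewrite eq_sym.
have hwit : forall a b c d, r c = Some a -> r d = Some b -> adj G c d -> a != b -> d != v ->
    exists c' d', [/\ r' c' = Some a, r' d' = Some b & adj (contract G v w) c' d'].
  move=> a b c d rc rd h ab dv'.
  case: (eqVneq c v) => [cv|cv].
    subst c; move: rc; rewrite rv => -[ax]; subst a.
    case: (nb d h) => dd; subst d.
      exists u, w; split; [exact: (hr _ _ ru uv)|exact: (hr _ _ rd wv)|by apply: adj_contract_new; rewrite // adjC].
    by move: rd; rewrite ru => -[bx]; rewrite bx eqxx in ab.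
  exists c, d; split; [exact: (hr _ _ rc cv)|exact: (hr _ _ rd dv')|by apply: adj_contract_old].
split.
- exact: (m_wf M).
- by move=> z zK; apply: (hr _ _ (m_lab M zK) (Kv z zK)).
- by move=> c x0 /hr2 [rc _]; exact: (m_rngK M rc).
- move=> c x0 /hr2 [rc cv]; rewrite /contract /verts /= !inE cv; exact: (m_rngG M rc).
- move=> c x0 /hr2 [rc cv].
  have x0K := m_rngK M rc.
  have hc : connect (brel (contract G v w) r' x0) (f c) (f x0).
    apply: (connect_map _ (m_con M rc)) => a b /brel_inv [h ra rb].
    have step : forall a b, adj G a b -> r a = Some x0 -> r b = Some x0 -> a = v ->
        f a = f b.
      move=> a1 b1 h1 ra1 rb1 a1v; subst a1; move: ra1; rewrite rv => -[xx0]; subst x0.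
      case: (nb b1 h1) => bb; subst b1; first by move: rb1; rewrite rw => -[]; move/eqP: x'x.
      by rewrite /f eqxx (negbTE uv).
    case: (eqVneq a v) => [av|av]; first by rewrite (step a b h ra rb av); exact: connect0.
    case: (eqVneq b v) => [bv|bv].
      by rewrite (step b a _ rb ra bv); [exact: connect0|rewrite adjC].
    apply: connect1; rewrite /brel /f (negbTE av) (negbTE bv) (hr _ _ ra av) (hr _ _ rb bv) eqxx.
    by rewrite adj_contract_old.
  by move: hc; rewrite /f (negbTE cv) (negbTE (Kv _ x0K)).
- move=> a b hab; have [ab _ _] := wf_adj (m_wf M) hab.
  have [c [d [rc rd h]]] := m_edge M hab.
  case: (eqVneq d v) => [dV|dV]; last exact: (hwit _ _ _ _ rc rd h ab dV).
  have cv : c != v by subst d; have [] := wf_adj wf h.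
  have hdc : adj G d c by rewrite adjC.
  have ba : b != a by rewrite eq_sym.
  have [c' [d' [rc' rd' h']]] := hwit _ _ _ _ rd rc hdc ba cv.
  by exists d', c'; split=> //; rewrite adjC.
Qed.

(* v in branch set of x, w in no branch set *)
Lemma model_contract_none G K r v w u x : wf_graph G -> model G K r ->
  deg G v <= 2 -> adj G v w -> adj G v u -> u != w ->
  r v = Some x -> v != x -> r u = Some x -> r w = None ->
  model (contract G v w) K (fun c => if c == v then None else if c == w then Some x else r c).
Proof.
move=> wf M dv hw hu uw rv vx ru rw.
have nb := deg_nbr2 wf dv hw hu uw.
have [vw _ wV] := wf_adj wf hw.
have [vu _ uV] := wf_adj wf hu.
have vK := model_lab_ne M rv vx.
have xK := m_rngK M rv.
pose r' c := if c == v then None else if c == w then Some x else r c.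
pose f c := if c == v then w else c.
have uv : u != v by rewrite eq_sym.
have wv : w != v by rewrite eq_sym.
have hr2 : forall c x0, r' c = Some x0 -> (c = w /\ x0 = x) \/ (r c = Some x0 /\ c != v /\ c != w).
  move=> c x0; rewrite /r'; case: (eqVneq c v) => // cv; case: (eqVneq c w) => [cw [<-]|cw rc].
    by left.
  by right.
have cw : forall c x0, r c = Some x0 -> c != w.
  by move=> c x0 rc; apply/eqP=> e; move: rc; rewrite e rw.
have hr : forall c x0, r c = Some x0 -> c != v -> r' c = Some x0.
  by move=> c x0 rc cv; rewrite /r' (negbTE cv) (negbTE (cw _ _ rc)).
have rw' : r' w = Some x by rewrite /r' (negbTE wv) eqxx.
have Kv : forall z, z \in verts K -> z != v.
  by move=> z zK; apply: contraNneq vK => <-.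
have huw : adj (contract G v w) u w by apply: adj_contract_new; rewrite // adjC.
split.
- exact: (m_wf M).
- by move=> z zK; apply: (hr _ _ (m_lab M zK) (Kv z zK)).
- by move=> c x0 /hr2 [[_ ->]|[rc _]] //; exact: (m_rngK M rc).
- move=> c x0 /hr2 [[-> _]|[rc [cv _]]]; rewrite /contract /verts /= !inE.
    by rewrite wv.
  by rewrite cv; exact: (m_rngG M rc).
- have hcon : forall c x0, r c = Some x0 -> c != v -> connect (brel (contract G v w) r' x0) c x0.
    move=> c x0 rc cv.
    have x0K := m_rngK M rc.
    have hc : connect (brel (contract G v w) r' x0) (f c) (f x0).
      apply: (connect_map _ (m_con M rc)) => a b /brel_inv [h ra rb].
      have step : forall a b, adj G a b -> r a = Some x0 -> r b = Some x0 -> a = v ->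
          connect (brel (contract G v w) r' x0) (f a) (f b).
        move=> a1 b1 h1 ra1 rb1 a1v; subst a1; move: ra1; rewrite rv => -[xx0]; subst x0.
        case: (nb b1 h1) => bb; subst b1; first by move: rb1; rewrite rw.
        apply: connect1; rewrite /f eqxx (negbTE uv) /brel rw' (hr _ _ ru uv) eqxx /=.
        by rewrite adjC huw.
      case: (eqVneq a v) => [av|av]; first exact: step.
      case: (eqVneq b v) => [bv|bv].
        by rewrite con_sym; apply: step => //; rewrite adjC.
      apply: connect1; rewrite /brel /f (negbTE av) (negbTE bv) (hr _ _ ra av) (hr _ _ rb bv).
      by rewrite eqxx adj_contract_old ?(cw _ _ ra) ?(cw _ _ rb).
    by move: hc; rewrite /f (negbTE cv) (negbTE (Kv _ x0K)).
  move=> c x0 /hr2 [[-> ->]|[rc [cv _]]]; last exact: hcon.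
  apply: connect_trans (hcon _ _ ru uv).
  by apply: connect1; rewrite /brel rw' (hr _ _ ru uv) eqxx adjC huw.
- move=> a b hab; have [ab _ _] := wf_adj (m_wf M) hab.
  have [c [d [rc rd h]]] := m_edge M hab.
  have nv : forall c d a b, r c = Some a -> r d = Some b -> adj G c d -> a != b -> c != v.
    move=> c1 d1 a1 b1 rc1 rd1 h1 ab1; apply/eqP=> cv; subst c1.
    move: rc1; rewrite rv => -[xa]; subst a1.
    case: (nb d1 h1) => dd; subst d1; first by move: rd1; rewrite rw.
    by move: rd1; rewrite ru => -[xb]; rewrite xb eqxx in ab1.
  have cv := nv _ _ _ _ rc rd h ab.
  have dv' : d != v by apply: (nv _ _ _ _ rd rc) => //; rewrite 1?adjC // eq_sym.
  exists c, d; split; [exact: (hr _ _ rc cv)|exact: (hr _ _ rd dv')|].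
  by apply: adj_contract_old.
Qed.

Lemma model_contract_nonlabel G K r v w : wf_graph G -> model G K r ->
  v \notin verts K -> deg G v <= 2 -> adj G v w -> exists r', model (contract G v w) K r'.
Proof.
move=> wf M vK dv hw.
have [vw vV wV] := wf_adj wf hw.
case rv: (r v) => [x|].
  have vx : v != x by apply: contraNneq vK => ->; exact: (m_rngK M rv).
  case: (eqVneq (r w) (Some x)) => [rw|rw].
    by eexists; apply: model_contract_same rv vx hw rw.
  have [u /brel_inv [hu _ ru]] := first_step (m_con M rv) vx.
  have uw : u != w by apply: contraTneq rw => <-; rewrite ru eqxx.
  case rw': (r w) => [x'|].
    have x'x : x' != x by apply: contraTneq rw => <-; rewrite rw' eqxx.
    by eexists; apply: model_contract_other hw hu uw rv vx ru rw' x'x.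
  by eexists; apply: model_contract_none hw hu uw rv vx ru rw'.
exists r; apply: (model_sub M).
  move=> a b h ra rb; apply: adj_contract_old => //.
    by apply: contraNneq ra => ->; rewrite rv.
  by apply: contraNneq rb => ->; rewrite rv.
move=> c rc; rewrite /contract /verts /= !inE.
case e: (r c) rc => [x0|] // _; rewrite (m_rngG M e) andbT.
by apply/eqP => cv; move: e; rewrite cv rv.
Qed.

Lemma deg_adj K v : wf_graph K -> 0 < deg K v -> exists b, adj K v b.
Proof.
move=> wf; rewrite /deg card_gt0 => /set0Pn [e]; rewrite inE => /andP[eK ve].
have [a [b [E hab]]] := wf_edge wf eK; subst e.
move: ve; rewrite !inE => /orP[]/eqP ?; subst; first by exists b.
by exists a; rewrite adjC.
Qed.

Lemma red_model G G' K r : wf_graph G -> red_step G G' -> model G K r -> mindeg_ge3 K ->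
  exists K' r', [/\ model G' K' r', mindeg_ge3 K' & #|edges K| <= #|edges K'|].
Proof.
move=> wf st M md; case: st => [v w vV dv hw|v vV d0].
  case vK: (v \in verts K).
    have [t [rt tv]] := label_ext wf M md vK dv.
    have M1 := model_ren M vK rt tv.
    have vK1 : v \notin verts (ren (sw v t) K).
      apply/negP=> /imsetP[z zK /esym vz].
      have : z = t by rewrite -(swK v t z) vz sw_a.
      move=> zt; subst z; have := model_lab_ne M rt tv; by rewrite zK.
    have [r' M'] := model_contract_nonlabel wf M1 vK1 dv hw.
    exists (ren (sw v t) K), r'; split=> //.
      exact: ren_mindeg (@sw_inj v t) md.
    by rewrite ren_card //; exact: sw_inj.
  have [r' M'] := model_contract_nonlabel wf M (negbT vK) dv hw.
  by exists K, r'; split.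
have noadj : forall z, ~ adj G v z by move=> z /adj_deg; rewrite d0.
have rv : r v = None.
  case rv: (r v) => [x|] //; exfalso.
  case: (eqVneq v x) => [vx|vx]; last first.
    by have [z /brel_inv [h _ _]] := first_step (m_con M rv) vx; exact: (noadj z).
  subst x; have vK := m_rngK M rv.
  have [b hb] := deg_adj (m_wf M) (leq_trans (isT : 0 < 3) (md v vK)).
  have [c [d [rc rd h]]] := m_edge M hb.
  case: (eqVneq c v) => [cv|cv]; first by subst c; exact: (noadj d).
  have := m_con M rc; rewrite con_sym => /first_step /(_ (_ : v != c)) [|z /brel_inv [h' _ _]].
    by rewrite eq_sym.
  exact: (noadj z).
exists K, r; split=> //.
apply: (model_sub M).
  move=> a b h ra rb; rewrite /adj /del_vertex /edges /= !inE; apply/andP; split=> //.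
  rewrite negb_or; apply/andP; split; apply/eqP=> e.
    by move: ra; rewrite -e rv.
  by move: rb; rewrite -e rv.
move=> c; case e: (r c) => [x0|] // _; have cV := m_rngG M e.
rewrite /del_vertex /verts /= !inE cV andbT; apply/eqP => cy; by rewrite cy rv in e.
Qed.

Definition pinv G H (P : T -> T -> seq T) :=
  [/\ forall a b, adj H a b -> gpath G a b (P a b),
      forall a b x, adj H a b -> x \in P a b -> x != b -> x \notin verts H &
      forall a b c d x, adj H a b -> adj H c d -> x \in P a b -> x != b ->
        x \in P c d -> x != d -> [set a; b] = [set c; d]].

Lemma pinv_init G : wf_graph G -> pinv G G (fun a b => [:: b]).
Proof.
move=> wf; split.
- move=> a b h; have [_ aV bV] := wf_adj wf h; split=> //=; by rewrite ?bV ?h.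
- by move=> a b x _; rewrite inE => ->.
- by move=> a b c d x _ _; rewrite inE => ->.
Qed.

Lemma gpath_cat G a v b p q : gpath G a v p -> gpath G v b q -> gpath G a b (p ++ q).
Proof.
case=> aV ap pp lp [vV aq pq lq]; split=> //.
- by rewrite all_cat ap aq.
- by rewrite cat_path pp lp pq.
- by rewrite last_cat lp lq.
Qed.

Lemma pinv_contract G H P v w : wf_graph H -> v \in verts H -> deg H v <= 2 -> adj H v w ->
  pinv G H P -> exists P', pinv G (contract H v w) P'.
Proof.
move=> wf vH dv hw [pa pb pc].
have [vw _ wH] := wf_adj wf hw.
pose P' a b := if adj H a b then P a b else if b == w then P a v ++ P v w else P w v ++ P v b.
pose newe a b := exists u1, [/\ adj H v u1, u1 != w & [set a; b] = [set u1; w]].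
have cls : forall a b, adj (contract H v w) a b ->
    (adj H a b /\ a != v /\ b != v) \/
    (~~ adj H a b /\ ((b = w /\ adj H a v /\ a != w) \/ (a = w /\ adj H b v /\ b != w))).
  move=> a b /adj_contract_inv [[h [av bv]]|[[-> [h aw]]|[-> [h bw]]]]; first by left.
    case: (boolP (adj H a w)) => haw; last by right; split=> //; left.
    left; split=> //; split; first by have [] := wf_adj wf h.
    by rewrite eq_sym.
  case: (boolP (adj H w b)) => hwb; last by right; split=> //; right.
  left; split=> //; split; first by rewrite eq_sym.
  by have [] := wf_adj wf h.
have newint : forall a b x, ~~ adj H a b ->
    ((b = w /\ adj H a v /\ a != w) \/ (a = w /\ adj H b v /\ b != w)) ->
    x \in P' a b -> x != b ->
    x = v \/ exists c, adj H v c /\ ((x \in P v c /\ x != c) \/ (x \in P c v /\ x != v)).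
  move=> a b x nab hn; rewrite /P' (negbTE nab).
  case: hn => [[-> [h aw]]|[-> [h bw]]].
    rewrite eqxx mem_cat => /orP[xa|xv] xw.
      case: (eqVneq x v) => [->|xv]; first by left.
      by right; exists a; split; [rewrite adjC|right].
    by right; exists w; split=> //; left.
  rewrite (negbTE bw) mem_cat => /orP[xa|xv] xb.
    case: (eqVneq x v) => [->|xv]; first by left.
    by right; exists w; split=> //; right.
  by right; exists b; split; [rewrite adjC|left].
have newe_of : forall a b, ((b = w /\ adj H a v /\ a != w) \/ (a = w /\ adj H b v /\ b != w)) ->
    newe a b.
  move=> a b [[-> [h aw]]|[-> [h bw]]].
    by exists a; split=> //; rewrite adjC.
  by exists b; split; [rewrite adjC| |rewrite set2C].
have intH : forall c x, adj H v c -> (x \in P v c /\ x != c) \/ (x \in P c v /\ x != v) ->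
    x \notin verts H.
  move=> c x h [[xi xc]|[xi xv]]; [exact: pb h xi xc|apply: pb _ xi xv; by rewrite adjC].
have mixed : forall a b c d x, adj H a b -> a != v -> b != v -> x \in P a b -> x != b ->
    ~~ adj H c d -> ((d = w /\ adj H c v /\ c != w) \/ (c = w /\ adj H d v /\ d != w)) ->
    x \in P' c d -> x != d -> False.
  move=> a b c d x hab av bv xi xb ncd hn xi' xd.
  case: (newint _ _ _ ncd hn xi' xd) => [xv|[c' [hc' hx]]].
    by subst x; move: (pb _ _ _ hab xi xb); rewrite vH.
  have E : [set a; b] = [set v; c'] \/ [set a; b] = [set c'; v].
    case: hx => [[xi2 xc]|[xi2 xv]]; [left|right].
      exact: pc hab hc' xi xb xi2 xc.
    by apply: pc hab _ xi xb xi2 xv; rewrite adjC.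
  have vin : v \in [set a; b] by case: E => ->; rewrite !inE eqxx ?orbT.
  move: vin; rewrite !inE => /orP[] /eqP e; [by rewrite e eqxx in av|by rewrite e eqxx in bv].
exists P'; split.
- move=> a b /cls [[h [av bv]]|[nab hn]].
    by rewrite /P' h; exact: pa h.
  rewrite /P' (negbTE nab); case: hn => [[-> [h aw]]|[-> [h bw]]].
    by rewrite eqxx; apply: gpath_cat (pa _ _ h) (pa _ _ hw).
  by rewrite (negbTE bw); apply: gpath_cat (pa w v _) (pa v b _); rewrite adjC.
- move=> a b x /cls [[h [av bv]]|[nab hn]] xi xb; apply/negP => /setD1P [xv xV].
    by rewrite /P' h in xi; move: (pb _ _ _ h xi xb); rewrite xV.
  case: (newint _ _ _ nab hn xi xb) => [xv'|[c [hc hx]]]; first by rewrite xv' eqxx in xv.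
  by move: (intH _ _ hc hx); rewrite xV.
- move=> a b c d x h1 h2 xi1 xb xi2 xd.
  case: (cls _ _ h1) => [[h1' [av bv]]|[nab hn]]; case: (cls _ _ h2) => [[h2' [cv dv']]|[ncd hn']].
  + by rewrite /P' h1' in xi1; rewrite /P' h2' in xi2; exact: pc h1' h2' xi1 xb xi2 xd.
  + by exfalso; rewrite /P' h1' in xi1; exact: mixed h1' av bv xi1 xb ncd hn' xi2 xd.
  + by exfalso; rewrite /P' h2' in xi2; exact: mixed h2' cv dv' xi2 xd nab hn xi1 xb.
  + have [u1 [hu1 u1w ->]] := newe_of _ _ hn.
    have [u2 [hu2 u2w ->]] := newe_of _ _ hn'.
    case: (deg_nbr2 wf dv hw hu1 u1w hu2) => e; first by rewrite e eqxx in u2w.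
    by rewrite e.
Qed.

Lemma pinv_del G H P v : pinv G H P -> pinv G (del_vertex H v) P.
Proof.
have hadj : forall a b, adj (del_vertex H v) a b -> adj H a b.
  by move=> a b; rewrite /adj /del_vertex /edges /= inE => /andP[].
case=> pa pb pc; split.
- by move=> a b /hadj; exact: pa.
- move=> a b x /hadj h xi xb; apply/negP => /setD1P [_ xV].
  by move: (pb _ _ _ h xi xb); rewrite xV.
- by move=> a b c d x /hadj h1 /hadj h2; exact: pc.
Qed.

Lemma pinv_red G H H' P : wf_graph H -> red_step H H' -> pinv G H P -> exists P', pinv G H' P'.
Proof.
move=> wf [v w vV dv hw|v vV _] p; first exact: pinv_contract p.
by exists P; exact: pinv_del.
Qed.

Lemma pinv_canon G H P : wf_graph H -> pinv G H P -> forall v, v \in verts H ->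
  disjoint_paths_prop G H v.
Proof.
move=> wf [pa pb pc] v vH; exists (P v); split; first by move=> u h; exact: pa.
move=> u u' h h' uu'; apply/setP=> x; rewrite !inE.
case: (eqVneq x v) => [->|xv] //=.
apply/negbTE/negP => /andP[xi xi'].
have [_ _ uH] := wf_adj wf h.
have [_ _ u'H] := wf_adj wf h'.
case: (eqVneq x u) => [xu|xu].
  subst x; case: (eqVneq u u') => [e|ne]; first by rewrite e eqxx in uu'.
  by move: (pb _ _ _ h' xi' ne); rewrite uH.
case: (eqVneq x u') => [xu'|xu'].
  by subst x; move: (pb _ _ _ h xi xu); rewrite u'H.
have := pc _ _ _ _ _ h h' xi xu xi' xu'.
case/set2_eq => [[_ e]|[e _]]; first by rewrite e eqxx in uu'.
by have [vu' _ _] := wf_adj wf h'; rewrite e eqxx in vu'.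
Qed.
End Basics.

Unset Implicit Arguments.
Theorem theorem21 (T : finType) (G H : graph T) :
  wf_graph G ->
  rtc (@red_step T) G H ->
  (forall H', ~ red_step H H') ->
  canonical_minor3core G H.
Proof.
move=> wf hr hterm.
have wfH : wf_graph H := rtc_wf (@wf_red_step T) wf hr.
have mdH : mindeg_ge3 H.
  move=> v vH; rewrite leqNgt; apply/negP => dv.
  case: (eqVneq (deg H v) 0) => [d0|d0].
    exact: (hterm _ (rs_isolated vH d0)).
  have d0' : 0 < deg H v by rewrite lt0n.
  have [w hw] := deg_adj wfH d0'.
  exact: (hterm _ (rs_contract vH (dv : deg H v <= 2) hw)).
have minH : is_minor G H := rtc_sub (@red_minor T) hr.
split; last first.
  have [P pH] : exists P, pinv G H P.
    elim: hr {hterm mdH minH wfH} => [|X Y hX IH st]; first by exists (fun a b => [:: b]); exact: pinv_init.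
    have [P pX] := IH; apply: pinv_red pX => //; exact: rtc_wf (@wf_red_step T) wf hX.
  exact: pinv_canon wfH pH.
split=> // H' mH' md'.
have [r M] := minor_model wf mH'.
have [K [r' [M' mdK cK]]] : exists K r', [/\ model H K r', mindeg_ge3 K & #|edges H'| <= #|edges K|].
  elim: hr {hterm mdH minH wfH} => [|X Y hX IH st]; first by exists H', r.
  have [K [r1 [M1 md1 c1]]] := IH.
  have [K2 [r2 [M2 md2 c2]]] := red_model (rtc_wf (@wf_red_step T) wf hX) st M1 md1.
  by exists K2, r2; split=> //; exact: leq_trans c1 c2.
exact: leq_trans cK (card_minor (model_minor wfH M')).
Qed.
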